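(* Let $K$ be a biquadratic bicyclic number field. Then $$(\{\rho_0\mathcal{O}_K:\rho_0\in K,\ \rho_0^2\in\mathbb{Q}\}:j_{\mathbb{Q}}^K(\mathcal P_{\mathbb{Q}}))=\begin{cases}4&\text{if }\sqrt{-1}\notin K,\\2&\text{if }\sqrt{-1}\in K.\end{cases}$$
   Context: $j_{\mathbb{Q}}^K(\mathcal P_{\mathbb{Q}})=\{x\mathcal{O}_K:x\in\mathbb{Q}^\times\}$, the group of fractional ideals of $K$ generated by nonzero rationals; both groups are subgroups of the group of nonzero fractional ideals of $K$. *)

(* Defs.v *)
From HB Require Import structures.
From mathcomp Require Import all_boot all_order all_algebra all_field.
Set Implicit Arguments. Unset Strict Implicit. Unset Printing Implicit Defensive.
Import Order.TTheory GRing.Theory Num.Theory.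
Local Open Scope ring_scope.

Section NF.
Variable K : fieldExtType rat.

Definition is_rat (x : K) : Prop := exists r : rat, x = r%:A.

Definition biquadratic : Prop :=
  \dim {:K} = 4%N /\
  exists a b : K, is_rat (a ^+ 2) /\ is_rat (b ^+ 2) /\
    (span [:: 1; a; b; a * b] = fullv).

Definition OK (x : K) : Prop :=
  exists p : {poly int}, p \is monic /\ root (map_poly (fun z : int => z%:~R : K) p) x.

Definition pideal (a : K) : K -> Prop := fun y => exists o, OK o /\ y = a * o.

(* the set x I = (x O_K) I for a rational x and a fractional ideal I *)
Definition rscale (x : rat) (I : K -> Prop) : K -> Prop :=
  fun y => exists z, I z /\ y = x%:A * z.

Definition sqrt_rat_elt (rho : K) : Prop := rho != 0 /\ is_rat (rho ^+ 2).

Definition same_coset (rho sigma : K) : Prop :=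
  exists x : rat, x != 0 /\ forall y, pideal rho y <-> rscale x (pideal sigma) y.

Definition index_eq (n : nat) : Prop :=
  exists s : seq K, size s = n /\
    (forall i, (i < n)%N -> sqrt_rat_elt (nth 0 s i)) /\
    (forall i j, (i < n)%N -> (j < n)%N -> i <> j ->
       ~ same_coset (nth 0 s i) (nth 0 s j)) /\
    (forall rho, sqrt_rat_elt rho -> exists2 i, (i < n)%N & same_coset rho (nth 0 s i)).

End NF.

(* Main.v *)
Require Import Defs.
From mathcomp Require Import all_boot all_order all_algebra all_field.
From mathcomp Require Import ring lra.
Import Order.TTheory GRing.Theory Num.Theory.
Local Open Scope ring_scope.

Lemma rat_root_int (r : rat) (p : {poly int}) :
  p \is monic -> root (map_poly (intmul 1) p) r -> r \is a Num.int.
Proof.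
move=> mp rr.
have : ratr r \in Aint.
  apply: (@root_monic_Aint (map_poly (intmul (1:algC)) p)).
  - have -> : map_poly (intmul (1:algC)) p = map_poly (ratr : rat -> algC) (map_poly (intmul 1) p).
      by rewrite -map_poly_comp; apply: eq_map_poly => z /=; rewrite ratr_int.
    by rewrite fmorph_root.
  - exact: monic_map.
  - by apply/polyOverP => i; rewrite coef_map intr_int.
move/(Cint_rat_Aint (Crat_rat r))/intrP => [m Hm].
have -> : r = m%:~R by apply: (@fmorph_inj _ _ (@ratr algC)) => /=; rewrite Hm ratr_int.
exact: intr_int.
Qed.

Lemma OKE (K : fieldExtType rat) x : OK x <-> integralOver (intmul (1:K)) x.
Proof. split; [case=> p [Hp Hr] | case=> p Hp Hr]; by exists p. Qed.

Lemma OK_rat (K : fieldExtType rat) r : OK (r%:A : K) -> r \is a Num.int.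
Proof.
case=> p [mp rr]; apply: (@rat_root_int r p mp).
rewrite -(fmorph_root (in_alg K)) -map_poly_comp; move: rr.
congr (root _ _); apply: eq_map_poly => z /=. by rewrite scaler_int.
Qed.

Lemma int_unit (r : rat) : r != 0 -> r \is a Num.int -> r^-1 \is a Num.int -> r = 1 \/ r = -1.
Proof.
move=> r0 h1 h2.
have := norm_intr_ge1 h1 r0; have := norm_intr_ge1 h2 (invr_neq0 r0).
rewrite normfV.
case: (lerP 0 r) => hr.
  rewrite ger0_norm // => hi h; left.
  have hr1 : r <= 1 by rewrite -invf_ge1 // lt_neqAle eq_sym r0.
  lra.
rewrite ltr0_norm // => hi h; right.
have hr1 : - r <= 1 by rewrite -invf_ge1 // oppr_gt0.
lra.
Qed.

Lemma OK_mul {K : fieldExtType rat} (x y : K) : OK x -> OK y -> OK (x * y).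
Proof. by move=> /OKE hx /OKE hy; apply/OKE; apply: integral_mul. Qed.
Lemma OK1 {K : fieldExtType rat} : OK (1 : K).
Proof. by apply/OKE; apply: integral1. Qed.

Lemma coset_unit {K : fieldExtType rat} {rho sigma u : K} {x : rat} :
  x != 0 -> u != 0 -> OK u -> OK u^-1 -> rho = x%:A * sigma * u -> same_coset rho sigma.
Proof.
move=> x0 u0 Hu Hu' E; exists x; split => // y; split.
  case=> o [Ho ->]; exists (sigma * (u * o)); split.
    by exists (u * o); split => //; apply: OK_mul.
  by rewrite E; set X := x%:A; ring.
case=> z [[o [Ho ->]] ->]; exists (u^-1 * o); split; first by apply: OK_mul.
by rewrite E; set X := x%:A; field.
Qed.

Lemma coset_inv {K : fieldExtType rat} {rho sigma : K} :
  rho != 0 -> sigma != 0 -> is_rat (rho ^+ 2) -> is_rat (sigma ^+ 2) ->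
  same_coset rho sigma ->
  exists x : rat, exists o : K, x != 0 /\ rho = x%:A * sigma * o /\
    (o = 1 \/ o = -1 \/ o ^+ 2 = -1).
Proof.
move=> rho0 sig0 [r1 E1] [r2 E2] [x [x0 H]].
have [z [[o [Ho Ez]] E]] : rscale x (pideal sigma) rho.
  by apply/H; exists 1; split; [apply: OK1 | rewrite mulr1].
have [o' [Ho' E']] : pideal rho (x%:A * sigma).
  by apply/H; exists sigma; split => //; exists 1; split; [apply: OK1 | rewrite mulr1].
subst z.
have xA0 : (x%:A : K) != 0 by rewrite scaler_eq0 negb_or x0 oner_neq0.
have r10 : r1 != 0.
  apply: contra rho0 => /eqP r10; move: E1; rewrite r10 scale0r => /eqP.
  by rewrite expf_eq0.
have r20 : r2 != 0.
  apply: contra sig0 => /eqP r20; move: E2; rewrite r20 scale0r => /eqP.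
  by rewrite expf_eq0.
have Eo : o = rho / (x%:A * sigma) by rewrite E; field; rewrite ?xA0 ?sig0 ?mulf_neq0 ?andbT.
have Eo' : o' = (x%:A * sigma) / rho by rewrite E'; field.
set r := r1 / (x ^+ 2 * r2).
have r0 : r != 0 by rewrite /r mulf_neq0 // invr_neq0 // mulf_neq0 // expf_neq0.
have hA : forall q : rat, q%:A = in_alg K q by [].
have Eo2 : o ^+ 2 = r%:A.
  rewrite Eo /r !hA expr_div_n exprMn; rewrite hA in E1; rewrite hA in E2; rewrite E1 E2.
  by field; rewrite !fmorph_eq0 r20 x0.
have Eo'2 : o' ^+ 2 = r^-1%:A.
  rewrite Eo' /r invf_div !hA expr_div_n exprMn; rewrite hA in E1; rewrite hA in E2; rewrite E1 E2.
  by field; rewrite !fmorph_eq0 ?r10 ?r20 ?x0.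
have [r1E | rm1E] : r = 1 \/ r = -1.
  have h1 : OK (o ^+ 2) by rewrite expr2; apply: OK_mul.
  have h2 : OK (o' ^+ 2) by rewrite expr2; apply: OK_mul.
  rewrite Eo2 in h1; rewrite Eo'2 in h2.
  exact: int_unit r0 (@OK_rat _ _ h1) (@OK_rat _ _ h2).
- exists x, o; split => //; split; first by rewrite E mulrA.
  move: Eo2; rewrite r1E scale1r => /eqP; rewrite sqrf_eq1 => /orP[] /eqP ->; auto.
- exists x, o; split => //; split; first by rewrite E mulrA.
  by right; right; rewrite Eo2 rm1E scaleN1r.
Qed.

Definition TT (K : fieldExtType rat) (a b : K) : 4.-tuple K := [tuple 1; a; b; a * b].
Arguments TT {K} a b.
Definition i1 : 'I_4 := @lift 4 ord0 ord0.
Definition i2 : 'I_4 := @lift 4 ord0 (@lift 3 ord0 ord0).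
Definition i3 : 'I_4 := @lift 4 ord0 (@lift 3 ord0 (@lift 2 ord0 ord0)).

Lemma G1 {K : fieldExtType rat} {a b : K} (k l : 'I_4) (t : rat) :
  free (TT a b) -> (TT a b)`_k = t%:A * (TT a b)`_l -> k = l.
Proof.
move=> fr E; have := congr1 (coord (TT a b) k) E.
rewrite coord_free // mulr_algl linearZ /= coord_free // eqxx.
by case: eqP => // _; rewrite mulr0 => /eqP; rewrite oner_eq0.
Qed.

Lemma decomp {K : fieldExtType rat} {a b : K} (rho : K) :
  span (TT a b) = fullv ->
  rho = (coord (TT a b) ord0 rho)%:A + (coord (TT a b) i1 rho)%:A * a
      + (coord (TT a b) i2 rho)%:A * b + (coord (TT a b) i3 rho)%:A * (a * b).
Proof.
move=> sp; have := @coord_span _ _ _ (TT a b) rho; rewrite sp memvf => /(_ isT) {1}->.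
rewrite !big_ord_recl big_ord0 addr0 !mulr_algl /= !addrA.
reflexivity.
Qed.

Lemma indep {K : fieldExtType rat} {a b : K} {c0 c1 c2 c3 : rat} :
  free (TT a b) ->
  c0%:A + c1%:A * a + c2%:A * b + c3%:A * (a * b) = 0 ->
  [/\ c0 = 0, c1 = 0, c2 = 0 & c3 = 0].
Proof.
move=> /freeP fr E.
have := fr (fun i : 'I_4 => nth 0 [:: c0; c1; c2; c3] i).
rewrite !mulr_algl in E; rewrite !big_ord_recl big_ord0 addr0 /= !addrA E => /(_ erefl) H.
by split; [exact: (H ord0) | exact: (H i1) | exact: (H i2) | exact: (H i3)].
Qed.

Lemma rat_alg {al be c0 c1 c2 c3 : rat} : al != 0 -> be != 0 ->
  (forall t, al * be != t ^+ 2) ->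
  c0 * c1 + c2 * c3 * be = 0 -> c0 * c2 + c1 * c3 * al = 0 -> c0 * c3 + c1 * c2 = 0 ->
  [\/ [/\ c1 = 0, c2 = 0 & c3 = 0], [/\ c0 = 0, c2 = 0 & c3 = 0],
      [/\ c0 = 0, c1 = 0 & c3 = 0] | [/\ c0 = 0, c1 = 0 & c2 = 0]].
Proof.
move=> al0 be0 nsq H1 H2 H3.
have [z0 | nz0] := eqVneq c0 0.
  subst c0; rewrite !mul0r !add0r in H1 H2 H3.
  have [z3 | nz3] := eqVneq c3 0.
    subst c3; move/eqP: H3; rewrite mulf_eq0 => /orP[] /eqP ->.
      by constructor 3.
    by constructor 2.
  move/eqP: H1; rewrite !mulf_eq0 (negbTE nz3) (negbTE be0) !orbF => /eqP ->.
  move/eqP: H2; rewrite !mulf_eq0 (negbTE nz3) (negbTE al0) !orbF => /eqP ->.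
  by constructor 4.
have z1 : c1 = 0.
  have [//|nz1] := eqVneq c1 0; exfalso.
  have E : c1 * (c0 ^+ 2 - c3 ^+ 2 * (al * be)) = 0.
    have -> : c1 * (c0 ^+ 2 - c3 ^+ 2 * (al * be)) =
      c0 * (c0 * c1 + c2 * c3 * be) - c3 * be * (c0 * c2 + c1 * c3 * al) by ring.
    by rewrite H1 H2; ring.
  move/eqP: E; rewrite mulf_eq0 (negbTE nz1) /= subr_eq0 => /eqP E.
  have [z3 | nz3] := eqVneq c3 0.
    by move: E; rewrite z3 expr0n /= mul0r => /eqP; rewrite expf_eq0 /= (negbTE nz0).
  have := nsq (c0 / c3); rewrite expr_div_n E.
  by rewrite [c3 ^+ 2 * _]mulrC mulfK ?expf_neq0 // eqxx.
subst c1; rewrite !mul0r !addr0 in H1 H2 H3.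
move/eqP: H3; rewrite mulf_eq0 (negbTE nz0) /= => /eqP z3.
move/eqP: H2; rewrite mulf_eq0 (negbTE nz0) /= => /eqP z2.
by constructor 1.
Qed.

Lemma decomp' {K : fieldExtType rat} {a b : K} (rho : K) :
  span (TT a b) = fullv ->
  exists c0 c1 c2 c3 : rat, rho = c0%:A + c1%:A * a + c2%:A * b + c3%:A * (a * b).
Proof. by move=> sp; do 4 eexists; apply: decomp. Qed.

Lemma T0 {K : fieldExtType rat} (a b : K) : (TT a b)`_(ord0 : 'I_4) = 1. Proof. by []. Qed.
Lemma T1 {K : fieldExtType rat} (a b : K) : (TT a b)`_i1 = a. Proof. by []. Qed.
Lemma T2 {K : fieldExtType rat} (a b : K) : (TT a b)`_i2 = b. Proof. by []. Qed.
Lemma T3 {K : fieldExtType rat} (a b : K) : (TT a b)`_i3 = a * b. Proof. by []. Qed.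

Lemma nsq_lemma {K : fieldExtType rat} {a b : K} {al be : rat} :
  free (TT a b) -> a ^+ 2 = al%:A -> b ^+ 2 = be%:A ->
  [/\ al != 0, be != 0 & forall t, al * be != t ^+ 2].
Proof.
move=> fr Ha Hb.
have hA : forall q : rat, q%:A = in_alg K q by [].
split.
- apply/eqP => z; move: Ha; rewrite z scale0r => /eqP; rewrite expf_eq0 /= => /eqP a0.
  have := @G1 K a b i1 (ord0 : 'I_4) 0 fr; rewrite T1 T0 a0 scale0r mul0r => /(_ erefl) /(congr1 val).
  by [].
- apply/eqP => z; move: Hb; rewrite z scale0r => /eqP; rewrite expf_eq0 /= => /eqP b0.
  have := @G1 K a b i2 (ord0 : 'I_4) 0 fr; rewrite T2 T0 b0 scale0r mul0r => /(_ erefl) /(congr1 val).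
  by [].
- move=> t; apply/eqP => E.
  have : (a * b) ^+ 2 == (t%:A) ^+ 2.
    by rewrite exprMn Ha Hb !hA -rmorphXn -E rmorphM.
  rewrite eqf_sqr => /orP[] /eqP E'.
    have := @G1 K a b i3 (ord0 : 'I_4) t fr; rewrite T3 T0 mulr1 => /(_ E') /(congr1 val).
    by [].
  have := @G1 K a b i3 (ord0 : 'I_4) (- t) fr; rewrite T3 T0 mulr1 scaleNr => /(_ E') /(congr1 val).
  by [].
Qed.

Lemma claim1 {K : fieldExtType rat} (a b : K) (al be : rat) (rho : K) :
  free (TT a b) -> span (TT a b) = fullv -> a ^+ 2 = al%:A -> b ^+ 2 = be%:A ->
  rho != 0 -> is_rat (rho ^+ 2) ->
  exists k : 'I_4, exists q : rat, q != 0 /\ rho = q%:A * (TT a b)`_k.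
Proof.
move=> fr sp Ha Hb rho0 [r Er2].
have [al0 be0 nsq] := nsq_lemma fr Ha Hb.
have hA : forall q : rat, q%:A = in_alg K q by [].
have [c0 [c1 [c2 [c3 Er]]]] := decomp' rho sp.
have S : rho ^+ 2 = (c0^+2 + c1^+2 * al + c2^+2 * be + c3^+2 * (al * be))%:A
   + (2 * (c0 * c1 + c2 * c3 * be))%:A * a + (2 * (c0 * c2 + c1 * c3 * al))%:A * b
   + (2 * (c0 * c3 + c1 * c2))%:A * (a * b).
  rewrite Er !hA; rewrite hA in Ha; rewrite hA in Hb.
  have -> : (in_alg K c0 + in_alg K c1 * a + in_alg K c2 * b + in_alg K c3 * (a * b)) ^+ 2 =
    in_alg K c0 ^+ 2 + in_alg K c1 ^+ 2 * a ^+ 2 + in_alg K c2 ^+ 2 * b ^+ 2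
    + in_alg K c3 ^+ 2 * a ^+ 2 * b ^+ 2
    + 2 * (in_alg K c0 * in_alg K c1 + in_alg K c2 * in_alg K c3 * b ^+ 2) * a
    + 2 * (in_alg K c0 * in_alg K c2 + in_alg K c1 * in_alg K c3 * a ^+ 2) * b
    + 2 * (in_alg K c0 * in_alg K c3 + in_alg K c1 * in_alg K c2) * (a * b) by ring.
  rewrite Ha Hb; ring.
have key : (c0^+2 + c1^+2 * al + c2^+2 * be + c3^+2 * (al * be) - r)%:A
   + (2 * (c0 * c1 + c2 * c3 * be))%:A * a + (2 * (c0 * c2 + c1 * c3 * al))%:A * b
   + (2 * (c0 * c3 + c1 * c2))%:A * (a * b) = rho ^+ 2 - r%:A.
  by rewrite S !hA; ring.
rewrite Er2 subrr in key.
have [_ X1 X2 X3] := indep fr key.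
have two0 : (2 : rat) != 0 by [].
move/eqP: X1; rewrite mulf_eq0 (negbTE two0) /= => /eqP X1.
move/eqP: X2; rewrite mulf_eq0 (negbTE two0) /= => /eqP X2.
move/eqP: X3; rewrite mulf_eq0 (negbTE two0) /= => /eqP X3.
have nz : forall q : rat, q = 0 -> rho = q%:A * 1 -> False.
  by move=> q -> E; move: rho0; rewrite E scale0r mul0r eqxx.
case: (rat_alg al0 be0 nsq X1 X2 X3) => [[z1 z2 z3]|[z0 z2 z3]|[z0 z1 z3]|[z0 z1 z2]].
- exists ord0, c0; rewrite T0; subst c1 c2 c3.
  have E : rho = c0%:A * 1 by rewrite Er !hA; ring.
  by split => //; apply/eqP => z; apply: (nz c0).
- exists i1, c1; rewrite T1; subst c0 c2 c3.
  have E : rho = c1%:A * a by rewrite Er !hA; ring.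
  split => //; apply/eqP => z; apply: (nz c1) => //; by rewrite E z !scale0r !mul0r.
- exists i2, c2; rewrite T2; subst c0 c1 c3.
  have E : rho = c2%:A * b by rewrite Er !hA; ring.
  split => //; apply/eqP => z; apply: (nz c2) => //; by rewrite E z !scale0r !mul0r.
- exists i3, c3; rewrite T3; subst c0 c1 c2.
  have E : rho = c3%:A * (a * b) by rewrite Er !hA; ring.
  split => //; apply/eqP => z; apply: (nz c3) => //; by rewrite E z !scale0r !mul0r.
Qed.

Lemma OK_i {K : fieldExtType rat} (u : K) : u ^+ 2 = -1 -> OK u.
Proof.
move=> Hu; exists ('X^2 + 1%:P); split; first by apply: monicXnaddC.
rewrite rmorphD /= map_polyXn map_polyC /= rootE !hornerE Hu.
by rewrite rmorph1 addNr.
Qed.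

Lemma inv_i {K : fieldExtType rat} (u : K) : u ^+ 2 = -1 -> u^-1 = - u.
Proof.
move=> Hu; have u0 : u != 0 by apply: contra_eqN Hu => /eqP ->; rewrite expr0n /= eq_sym oppr_eq0 oner_eq0.
by apply: (mulfI u0); rewrite mulfV // mulrN -expr2 Hu opprK.
Qed.

Lemma OK_i' {K : fieldExtType rat} (u : K) : u ^+ 2 = -1 -> OK u^-1.
Proof. by move=> Hu; rewrite inv_i //; apply: OK_i; rewrite sqrrN. Qed.

Lemma same_TT {K : fieldExtType rat} {a b : K} (k l : 'I_4) :
  free (TT a b) -> is_rat ((TT a b)`_k ^+ 2) -> is_rat ((TT a b)`_l ^+ 2) ->
  same_coset (TT a b)`_k (TT a b)`_l ->
  k = l \/ exists x : rat, exists o : K, (TT a b)`_k = x%:A * (TT a b)`_l * o /\ o ^+ 2 = -1.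
Proof.
move=> fr rk rl H.
have nz : forall j : 'I_4, (TT a b)`_j != 0.
  by move=> j; apply: (free_not0 fr); apply: mem_nth; rewrite size_tuple.
have [x [o [x0 [E [o1|[o1|o2]]]]]] := coset_inv (nz k) (nz l) rk rl H.
- by left; apply: (G1 _ _ x fr); rewrite E o1 mulr1.
- by left; apply: (G1 _ _ (- x) fr); rewrite E o1 mulrN1 scaleNr mulNr.
- by right; exists x, o.
Qed.

Theorem mainTheorem9 (K : fieldExtType rat) :
  biquadratic K ->
  ((~ exists i : K, i ^+ 2 = -1) -> index_eq K 4) /\
  ((exists i : K, i ^+ 2 = -1) -> index_eq K 2).
Proof.
case=> dim4 [a [b [[al Ha] [[be Hb] sp]]]].
have sp' : span (TT a b) = fullv := sp.
have fr : free (TT a b).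
  by rewrite /free sp' size_tuple; apply/eqP.
have hA : forall q : rat, q%:A = in_alg K q by [].
have nz : forall j : 'I_4, (TT a b)`_j != 0.
  by move=> j; apply: (free_not0 fr); apply: mem_nth; rewrite size_tuple.
have sq : forall j : 'I_4, is_rat ((TT a b)`_j ^+ 2).
  case=> [[|[|[|[|j]]]] Hj] //=.
  - by exists 1; rewrite expr1n scale1r.
  - by exists al.
  - by exists be.
  - by exists (al * be); rewrite exprMn Ha Hb !hA rmorphM.
have sr : forall j : 'I_4, sqrt_rat_elt (TT a b)`_j by move=> j; split; [apply: nz | apply: sq].
have cov : forall rho, sqrt_rat_elt rho -> exists k : 'I_4, exists q : rat,
    q != 0 /\ rho = q%:A * (TT a b)`_k.
  by move=> rho [r0 rr]; exact: (@claim1 K a b al be rho fr sp' Ha Hb r0 rr).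
split.
  move=> noi; exists (tval (TT a b)); split; first by rewrite size_tuple.
  split; first by move=> i Hi; apply: (sr (Ordinal Hi)).
  split.
    move=> i j Hi Hj ij H.
    have := @same_TT K a b (Ordinal Hi) (Ordinal Hj) fr (sq _) (sq _) H.
    case=> [[]|[x [o [_ o2]]]] //; apply: noi; by exists o.
  move=> rho /cov [k [q [q0 E]]]; exists k => //.
  apply: (coset_unit (u := 1) (x := q)) => //; rewrite ?invr1 ?oner_neq0 //; try exact: OK1; rewrite mulr1; exact: E.
case=> i0 Hi0.
have i0nz : i0 != 0.
  by apply: contra_eqN Hi0 => /eqP ->; rewrite expr0n /= eq_sym oppr_eq0 oner_eq0.
have i0r : is_rat (i0 ^+ 2) by exists (-1); rewrite Hi0 scaleN1r.
have [m [qi [qi0 Ei]]] := cov i0 (conj i0nz i0r).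
have m0 : m != ord0.
  apply/eqP => mz; move: Hi0; rewrite Ei mz T0 mulr1 => E.
  have : qi ^+ 2 = -1.
    by apply: (fmorph_inj (in_alg K)); rewrite rmorphXn rmorphN1; exact: E.
  by move=> h; have := sqr_ge0 qi; rewrite h; lra.
have table : forall m : 'I_4, m != ord0 -> exists c d : 'I_4, exists t : rat,
   t != 0 /\ (TT a b)`_c * (TT a b)`_m = t%:A * (TT a b)`_d /\ c != ord0 /\ c != m
   /\ d != ord0 /\ (forall k : 'I_4, [|| k == ord0, k == m, k == c | k == d]).
  case=> [[|[|[|[|mm]]]] Hm] // _.
  - exists i2, i3, 1; split; first exact: oner_neq0.
    split; first by rewrite T2 T3 /= scale1r mul1r mulrC.
    do 3 (split => //); by case=> [[|[|[|[|k]]]] Hk].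
  - exists i1, i3, 1; split; first exact: oner_neq0.
    split; first by rewrite T1 T3 /= scale1r mul1r.
    do 3 (split => //); by case=> [[|[|[|[|k]]]] Hk].
  - exists i1, i2, al; split; first by case: (nsq_lemma fr Ha Hb).
    split; first by rewrite T1 T2 /= mulrA -expr2 Ha.
    do 3 (split => //); by case=> [[|[|[|[|k]]]] Hk].
have [c [d [t [t0 [Ecm [c0n [cm [d0n covk]]]]]]]] := table m m0.
have key : forall k l : 'I_4, same_coset (TT a b)`_k (TT a b)`_l ->
    k = l \/ exists s : rat, (TT a b)`_k = s%:A * ((TT a b)`_l * (TT a b)`_m).
  move=> k l H; case: (@same_TT K a b k l fr (sq k) (sq l) H) => [->|[x [o [E o2]]]];
    [by left | right].
  have : o ^+ 2 == i0 ^+ 2 by rewrite o2 Hi0.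
  rewrite eqf_sqr => /orP[] /eqP oE.
  - by exists (x * qi); rewrite E oE Ei !hA rmorphM; ring.
  - by exists (- (x * qi)); rewrite E oE Ei !hA rmorphN rmorphM; ring.
exists [:: (TT a b)`_(ord0 : 'I_4); (TT a b)`_c]; split => //.
split; first by case=> [|[|//]] _; apply: sr.
split.
  case=> [|[|//]] [|[|//]] _ _ // _ H.
  - case: (key _ _ H) => [E|[s E]]; first by move: c0n; rewrite -E eqxx.
    move: E; rewrite Ecm => E.
    have : ord0 = d by apply: (G1 _ _ (s * t) fr); rewrite E !hA rmorphM; ring.
    by move=> E'; move: d0n; rewrite -E' eqxx.
  - case: (key _ _ H) => [E|[s E]]; first by move: c0n; rewrite E eqxx.
    move: E; rewrite T0 mul1r => E.
    by move: cm; rewrite (G1 _ _ s fr E) eqxx.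
move=> rho /cov [k [q [q0 E]]].
have OKi := OK_i _ Hi0; have OKi' := OK_i' _ Hi0.
have qi0' : in_alg K qi != 0 by rewrite fmorph_eq0.
have t0' : in_alg K t != 0 by rewrite fmorph_eq0.
case/or4P: (covk k) => /eqP ek; subst k.
- exists 0%N => //; change (same_coset rho (TT a b)`_(ord0 : 'I_4)).
  apply: (coset_unit (u := 1) (x := q)) => //; rewrite ?invr1 ?oner_neq0 //; try exact: OK1; rewrite mulr1; exact: E.
- exists 0%N => //; change (same_coset rho (TT a b)`_(ord0 : 'I_4)).
  apply: (coset_unit (u := i0) (x := q / qi)) => //.
    by rewrite mulf_neq0 // invr_neq0.
  by rewrite E Ei T0 !hA fmorph_div; field.
- exists 1%N => //; change (same_coset rho (TT a b)`_c).
  apply: (coset_unit (u := 1) (x := q)) => //; rewrite ?invr1 ?oner_neq0 //; try exact: OK1; rewrite mulr1; exact: E.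
- exists 1%N => //; change (same_coset rho (TT a b)`_c).
  apply: (coset_unit (u := i0) (x := q / (t * qi))) => //.
    by rewrite mulf_neq0 // invr_neq0 // mulf_neq0.
  rewrite E Ei.
  have -> : (q / (t * qi))%:A * (TT a b)`_c * (qi%:A * (TT a b)`_m) =
    (q / (t * qi))%:A * qi%:A * ((TT a b)`_c * (TT a b)`_m) by ring.
  rewrite Ecm !hA fmorph_div rmorphM; field.
  by rewrite t0' qi0'.
Qed.
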